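(* Let $H$ be an infinite-dimensional real Hilbert space. Then for every integer $m\ge1$ and every $\alpha\in(0,1/3]$, $$\tfrac12 m^{-\alpha/2}\le \gamma_m(\alpha,H)\le m^{-\alpha/2}.$$
   Context: A (symmetric) dictionary in $H$ is a set $\mathcal D$ of unit vectors with dense span and $g\in\mathcal D\Rightarrow -g\in\mathcal D$. $A_1(\mathcal D)$ is the closed convex hull of $\mathcal D$ and $\|f\|_{A_1(\mathcal D)}:=\inf\{M:f/M\in A_1(\mathcal D)\}$. Pure Greedy Algorithm (PGA): for $f\in H$ let $g(f)\in\mathcal D$ be an element maximizing $\langle f,g\rangle$ over $\mathcal D$ (assumed to exist); $f_0:=f$, $G_0(f,\mathcal D):=0$, $G_m(f,\mathcal D):=G_{m-1}(f,\mathcal D)+\langle f_{m-1},g(f_{m-1})\rangle g(f_{m-1})$, $f_m:=f-G_m(f,\mathcal D)$. For $\alpha\in(0,1]$, $$\gamma_m(\alpha,H):=\sup_{\{G_m(f,\mathcal D)\},f,\mathcal D}\frac{\|f-G_m(f,\mathcal D)\|}{\|f\|^{1-\alpha}\|f\|_{A_1(\mathcal D)}^{\alpha}},$$ supremum over all dictionaries $\mathcal D$, all $f\ne0$ with $\|f\|_{A_1(\mathcal D)}<\infty$, and all possible realizations of the PGA. *)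

(* Defs.v *)
From Stdlib Require Import Reals List.
From Coquelicot Require Import Coquelicot.
Open Scope R_scope.

Section Hilbert.
Context {H : ModuleSpace R_Ring}.
Variable ip : H -> H -> R.

Definition is_inner_product : Prop :=
  (forall x y, ip x y = ip y x) /\
  (forall x y z, ip (plus x y) z = ip x z + ip y z) /\
  (forall (a : R) x y, ip (scal a x) y = a * ip x y) /\
  (forall x, 0 <= ip x x) /\
  (forall x, ip x x = 0 -> x = zero).

Definition hnorm (x : H) : R := sqrt (ip x x).

Definition hcomplete : Prop :=
  forall u : nat -> H,
    (forall eps, 0 < eps -> exists N, forall n p, (N <= n)%nat -> (N <= p)%nat ->
        hnorm (minus (u n) (u p)) < eps) ->
    exists l, forall eps, 0 < eps -> exists N, forall n, (N <= n)%nat ->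
        hnorm (minus (u n) l) < eps.

Inductive in_span (P : H -> Prop) : H -> Prop :=
  | span_zero : in_span P zero
  | span_step : forall (a : R) g x, P g -> in_span P x ->
                in_span P (plus (scal a g) x).

Definition infinite_dim : Prop :=
  ~ exists l : list H, forall x, in_span (fun g => List.In g l) x.

Definition inf_dim_hilbert : Prop :=
  is_inner_product /\ hcomplete /\ infinite_dim.

Definition dictionary (D : H -> Prop) : Prop :=
  (forall g, D g -> hnorm g = 1) /\
  (forall g, D g -> D (opp g)) /\
  (forall f eps, 0 < eps -> exists x, in_span D x /\ hnorm (minus f x) < eps).

Definition conv_hull (D : H -> Prop) (x : H) : Prop :=
  exists l : list (R * H),
    List.Forall (fun p => 0 <= fst p /\ D (snd p)) l /\
    fold_right (fun p s => fst p + s) 0 l = 1 /\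
    x = fold_right (fun p acc => plus (scal (fst p) (snd p)) acc) zero l.

Definition A1 (D : H -> Prop) (x : H) : Prop :=
  forall eps, 0 < eps -> exists y, conv_hull D y /\ hnorm (minus x y) < eps.

Definition A1_scales (D : H -> Prop) (f : H) (M : R) : Prop :=
  0 < M /\ A1 D (scal (/ M) f).

Definition A1_finite (D : H -> Prop) (f : H) : Prop :=
  exists M, A1_scales D f M.

(** ||f||_{A_1(D)} = inf {M : f/M in A_1(D)} (meaningful when A1_finite) *)
Definition A1_norm (D : H -> Prop) (f : H) : R :=
  real (Glb_Rbar (A1_scales D f)).

(** A realization of the first m steps of the Pure Greedy Algorithm:
    g k is a maximizer of <f_k, .> over D and
    f_{k+1} = f_k - <f_k, g k> g k, with f_0 = f.
    Then G_m(f,D) = f - f_m, i.e. f - G_m(f,D) = fs m. *)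
Definition pga_realization (m : nat) (D : H -> Prop) (f : H)
    (g : nat -> H) (fs : nat -> H) : Prop :=
  fs 0%nat = f /\
  forall k, (k < m)%nat ->
    D (g k) /\
    (forall h, D h -> ip (fs k) h <= ip (fs k) (g k)) /\
    fs (S k) = minus (fs k) (scal (ip (fs k) (g k)) (g k)).

Definition gamma (m : nat) (alpha : R) : Rbar :=
  Lub_Rbar (fun r => exists (D : H -> Prop) (f : H) (g fs : nat -> H),
    dictionary D /\ f <> zero /\ A1_finite D f /\
    pga_realization m D f g fs /\
    r = hnorm (fs m) /
        (Rpower (hnorm f) (1 - alpha) * Rpower (A1_norm D f) alpha)).

End Hilbert.

(* Main.v *)
Require Import Defs.
From Stdlib Require Import Reals Lra Lia Psatz List Classical.
From Coquelicot Require Import Coquelicot.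
Open Scope R_scope.

Lemma exp_le_mono x y : x <= y -> exp x <= exp y.
Proof. intros [h|h]; [left; now apply exp_increasing | subst; lra]. Qed.

Fixpoint rsum (c : nat -> R) (n : nat) : R :=
  match n with O => 0 | S n => rsum c n + c n end.

Lemma rsum_le c d n : (forall j, (j < n)%nat -> c j <= d j) -> rsum c n <= rsum d n.
Proof. induction n; simpl; intros h. lra. assert (c n <= d n) by (apply h; lia).
  assert (rsum c n <= rsum d n) by (apply IHn; intros; apply h; lia). lra. Qed.

Lemma rsum_mult c a n : rsum (fun j => c j * a) n = rsum c n * a.
Proof. induction n; simpl; [ring| rewrite IHn; ring]. Qed.

Lemma rsum_ext c d n : (forall j, (j < n)%nat -> c j = d j) -> rsum c n = rsum d n.
Proof. induction n; simpl; intros h. lra. rewrite (h n) by lia. rewrite IHn; auto. Qed.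

Lemma rsum_const a n : rsum (fun _ => a) n = INR n * a.
Proof. induction n; simpl rsum; [simpl; ring| rewrite IHn, S_INR; ring]. Qed.

Lemma rsum_nonneg c n : (forall j, (j < n)%nat -> 0 <= c j) -> 0 <= rsum c n.
Proof. intros h. pose proof (rsum_le (fun _ => 0) c n h) as h2. rewrite rsum_const in h2. lra. Qed.

Lemma plus_minus_K {G : AbelianGroup} (x y : G) : plus (minus x y) y = x.
Proof. unfold minus. rewrite <- plus_assoc, plus_opp_l, plus_zero_r. auto. Qed.

Lemma minus_zero_eq {G : AbelianGroup} (x y : G) : minus x y = zero -> x = y.
Proof. intros h. rewrite <- (plus_minus_K x y), h, plus_zero_l. auto. Qed.

Section IP.
Context {H : ModuleSpace R_Ring} (ip : H -> H -> R) (Hip : is_inner_product ip).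

Lemma ip_sym x y : ip x y = ip y x. Proof. apply Hip. Qed.
Lemma ip_plusl x y z : ip (plus x y) z = ip x z + ip y z. Proof. apply Hip. Qed.
Lemma ip_scall (a : R) x y : ip (scal a x) y = a * ip x y. Proof. apply Hip. Qed.
Lemma ip_pos x : 0 <= ip x x. Proof. apply Hip. Qed.
Lemma ip_def x : ip x x = 0 -> x = zero. Proof. apply Hip. Qed.

Lemma ip_zerol y : ip zero y = 0.
Proof. rewrite <- (scal_zero_l (K:=R_Ring) (zero : H)). rewrite ip_scall. match goal with |- ?a * _ = _ => change a with 0 end. ring. Qed.
Lemma ip_oppl x y : ip (opp x) y = - ip x y.
Proof. pose proof (ip_plusl (opp x) x y) as h. rewrite (plus_opp_l (G:=H)), ip_zerol in h. lra. Qed.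
Lemma ip_minusl x y z : ip (minus x y) z = ip x z - ip y z.
Proof. unfold minus. rewrite ip_plusl, ip_oppl. ring. Qed.
Lemma ip_plusr x y z : ip z (plus x y) = ip z x + ip z y.
Proof. rewrite !(ip_sym z). apply ip_plusl. Qed.
Lemma ip_scalr (a : R) x y : ip y (scal a x) = a * ip y x.
Proof. rewrite !(ip_sym y). apply ip_scall. Qed.
Lemma ip_zeror y : ip y zero = 0. Proof. rewrite ip_sym. apply ip_zerol. Qed.
Lemma ip_oppr x y : ip y (opp x) = - ip y x. Proof. rewrite !(ip_sym y). apply ip_oppl. Qed.
Lemma ip_minusr x y z : ip z (minus x y) = ip z x - ip z y.
Proof. rewrite !(ip_sym z). apply ip_minusl. Qed.

Lemma ip_step u v (c : R) : ip (minus u (scal c v)) (minus u (scal c v)) =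
  ip u u - 2 * c * ip u v + c * c * ip v v.
Proof. rewrite ip_minusl, !ip_minusr, !ip_scall, !ip_scalr, (ip_sym v u). ring. Qed.

Lemma hnorm_sq x : hnorm ip x * hnorm ip x = ip x x.
Proof. unfold hnorm. apply sqrt_sqrt, ip_pos. Qed.

Lemma hnorm1 x : hnorm ip x = 1 -> ip x x = 1.
Proof. intros h. rewrite <- hnorm_sq, h. ring. Qed.

Lemma hnorm_zero : hnorm ip zero = 0.
Proof. unfold hnorm. rewrite ip_zerol. apply sqrt_0. Qed.

Lemma young u v t : 0 < t -> 2 * ip u v <= t * ip u u + ip v v / t.
Proof. intros ht. pose proof (ip_pos (minus (scal t u) v)) as h.
  rewrite ip_minusl, !ip_minusr, !ip_scall, !ip_scalr, (ip_sym v u) in h.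
  assert (e : t * (t * ip u u + ip v v / t) = t*t*ip u u + ip v v) by (field; lra).
  apply Rmult_le_reg_l with t; auto. rewrite e. nra. Qed.

Definition lin (l : list (R * H)) : H :=
  fold_right (fun p acc => plus (scal (fst p) (snd p)) acc) zero l.

Lemma ip_lin_l l y : ip (lin l) y = fold_right (fun p s => fst p * ip (snd p) y + s) 0 l.
Proof. induction l; simpl. apply ip_zerol. rewrite ip_plusl, ip_scall, IHl. auto. Qed.

Lemma conv_le D u y R0 : conv_hull D y -> (forall h, D h -> ip u h <= R0) -> ip u y <= R0.
Proof. intros [l [hf [hs ->]]] hD. rewrite ip_sym. fold (lin l). rewrite ip_lin_l.
  assert (fold_right (fun p s => fst p * ip (snd p) u + s) 0 l <=
          R0 * fold_right (fun p s => fst p + s) 0 l).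
  { clear hs. induction l; simpl. lra. inversion hf; subst. destruct H2 as [h1 h2].
    specialize (IHl H3). rewrite ip_sym. specialize (hD _ h2). nra. }
  rewrite hs in H0. lra. Qed.

Lemma A1_le D u x R0 : Defs.A1 ip D x -> (forall h, D h -> ip u h <= R0) -> ip u x <= R0.
Proof. intros hA hD. apply Rle_plus_epsilon. intros e he.
  set (a := ip u u). assert (0 <= a) by apply ip_pos.
  destruct (hA (e / (a + 1))) as [y [hy hn]]. apply Rdiv_lt_0_compat; lra.
  pose proof (conv_le D u y R0 hy hD).
  set (v := minus x y) in *.
  assert (ip v v < (e/(a+1)) * (e/(a+1))).
  { rewrite <- hnorm_sq. assert (0 <= hnorm ip v) by apply sqrt_pos. nra. }
  assert (hv : x = plus v y) by (symmetry; unfold v; apply (plus_minus_K (G:=H))).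
  rewrite hv, ip_plusr.
  pose proof (young u v (e/(a+1))) as hy2.
  assert (0 < e/(a+1)) by (apply Rdiv_lt_0_compat; lra).
  specialize (hy2 H3).
  assert (ip v v / (e/(a+1)) < e/(a+1)).
  { apply Rmult_lt_reg_r with (e/(a+1)); auto.
    replace (ip v v / (e / (a + 1)) * (e / (a + 1))) with (ip v v) by (field; lra). lra. }
  assert (e/(a+1) * a + e/(a+1) <= 2*e).
  { replace (e/(a+1)*a + e/(a+1)) with e by (field; lra). lra. }
  set (t := e/(a+1)) in *. change (ip u u) with a in hy2. set (ta := t*a) in *. set (w := ip v v / t) in *. lra. Qed.

Lemma scales_le D u f M R0 : A1_scales ip D f M -> (forall h, D h -> ip u h <= R0) -> ip u f <= R0 * M.
Proof. intros [hM hA] hD. pose proof (A1_le D u _ R0 hA hD) as h.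
  rewrite ip_scalr in h. apply Rmult_le_reg_l with (/M). apply Rinv_0_lt_compat; auto.
  replace (/M * (R0 * M)) with R0 by (field; lra). lra. Qed.

Lemma A1_norm_spec D f : A1_finite ip D f ->
  0 <= A1_norm ip D f /\ (forall M, A1_scales ip D f M -> A1_norm ip D f <= M) /\
  (forall e, 0 < e -> exists M, A1_scales ip D f M /\ M < A1_norm ip D f + e).
Proof. intros [M0 hM0]. unfold A1_norm.
  destruct (Glb_Rbar_correct (A1_scales ip D f)) as [hlb hgr].
  assert (h0 : Rbar_le 0 (Glb_Rbar (A1_scales ip D f))).
  { apply hgr. intros x [hx _]. simpl. lra. }
  pose proof (hlb M0 hM0) as h1.
  destruct (Glb_Rbar (A1_scales ip D f)) as [b| |]; simpl in *; try contradiction.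
  split; [auto|split]. intros M hM. exact (hlb M hM).
  intros e he. apply NNPP. intros hn.
  assert (Rbar_le (b + e) b).
  { apply hgr. intros x hx. simpl. apply Rnot_lt_le. intros hlt. apply hn. exists x. auto. }
  simpl in H0. lra. Qed.

Lemma glb_le D u f R0 : A1_finite ip D f -> 0 <= R0 -> (forall h, D h -> ip u h <= R0) ->
  ip u f <= R0 * A1_norm ip D f.
Proof. intros hF hR hD. destruct (A1_norm_spec D f hF) as [h0 [h1 h2]].
  apply Rle_plus_epsilon. intros e he.
  destruct (h2 (e / (R0 + 1))) as [M [hM hlt]]. apply Rdiv_lt_0_compat; lra.
  pose proof (scales_le D u f M R0 hM hD).
  assert (R0 * M <= R0 * (A1_norm ip D f + e/(R0+1))) by nra.
  assert (R0 * (e/(R0+1)) <= e).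
  { apply Rmult_le_reg_r with (R0+1). lra. field_simplify; lra. }
  nra. Qed.

End IP.

Section PGA.
Context {H : ModuleSpace R_Ring} (ip : H -> H -> R) (Hip : is_inner_product ip).
Context (D : H -> Prop) (f : H) (g fs : nat -> H) (m : nat).
Hypothesis hdict : dictionary ip D.
Hypothesis hfin : A1_finite ip D f.
Hypothesis hpga : pga_realization ip m D f g fs.

Let r k := ip (fs k) (g k).
Let a k := ip (fs k) (fs k).
Let B := A1_norm ip D f.
Let S k := rsum r k.

Lemma L1 k : (k < m)%nat -> 0 <= r k.
Proof. intros hk. destruct hdict as [_ [hsym _]]. destruct hpga as [_ hs].
  destruct (hs k hk) as [hg [hmax _]]. specialize (hmax _ (hsym _ hg)).
  rewrite (ip_oppr ip Hip) in hmax. unfold r. lra. Qed.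

Lemma L2 k : (k <= m)%nat -> forall y, ip (fs k) y = ip f y - rsum (fun j => r j * ip (g j) y) k.
Proof. destruct hpga as [h0 hs]. induction k; intros hk y.
  - rewrite h0. simpl. ring.
  - destruct (hs k) as [_ [_ he]]. lia. rewrite he, (ip_minusl ip Hip), (ip_scall ip Hip), IHk by lia.
    simpl. unfold r. ring. Qed.

Lemma L3 k : (k < m)%nat -> a k <= r k * (B + S k).
Proof. intros hk. destruct hdict as [_ [hsym _]]. destruct hpga as [_ hs].
  destruct (hs k hk) as [hg [hmax _]].
  unfold a. rewrite (L2 k) by lia.
  assert (h1 : ip f (fs k) <= r k * B).
  { rewrite (ip_sym ip Hip). apply (glb_le ip Hip); auto. apply L1; auto. }
  assert (h2 : rsum (fun j => r j * (- r k)) k <= rsum (fun j => r j * ip (g j) (fs k)) k).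
  { apply rsum_le. intros j hj. destruct (hs j) as [hgj _]. lia.
    specialize (hmax _ (hsym _ hgj)). rewrite (ip_oppr ip Hip) in hmax.
    rewrite (ip_sym ip Hip). pose proof (L1 j ltac:(lia)). fold (r k) in hmax. nra. }
  rewrite rsum_mult in h2. unfold S. lra. Qed.

Lemma L4 k : (k < m)%nat -> a (Datatypes.S k) = a k - r k ^ 2.
Proof. intros hk. destruct hdict as [hu _]. destruct hpga as [_ hs].
  destruct (hs k hk) as [hg [_ he]]. unfold a. rewrite he, (ip_step ip Hip).
  rewrite (hnorm1 ip Hip _ (hu _ hg)). unfold r. ring. Qed.

Lemma B_nonneg : 0 <= B.
Proof. apply (A1_norm_spec ip D f hfin). Qed.

Lemma L5 k : (k <= m)%nat -> a k * (B + S k) <= a 0%nat * B.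
Proof. induction k; intros hk. unfold S; simpl. lra.
  rewrite L4 by lia. unfold S; simpl rsum. fold (S k).
  pose proof (L3 k ltac:(lia)). pose proof (L1 k ltac:(lia)). specialize (IHk ltac:(lia)).
  assert (0 <= a k) by apply (ip_pos ip Hip).
  nra. Qed.

Lemma L6 k j : (k <= j <= m)%nat -> a j <= a k /\ S k <= S j.
Proof. intros [h1 h2]. induction h1. lra.
  rewrite L4 by lia. unfold S at 2; simpl rsum. fold (S m0).
  pose proof (L1 m0 ltac:(lia)). specialize (IHh1 ltac:(lia)). nra. Qed.

Lemma L7 k : (k <= m)%nat -> INR k * a m <= S k * (B + S m).
Proof. induction k; intros hk. unfold S; simpl. lra.
  specialize (IHk ltac:(lia)). rewrite S_INR. unfold S at 1; simpl rsum. fold (S k).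
  pose proof (L3 k ltac:(lia)). pose proof (L1 k ltac:(lia)).
  destruct (L6 k m ltac:(lia)). nra. Qed.

Lemma pga_bound : a m <= a 0%nat /\ INR m * (a m) ^ 3 <= (a 0%nat * B) ^ 2.
Proof. split. apply (L6 0 m). lia.
  pose proof (L5 m (le_n m)). pose proof (L7 m (le_n m)). pose proof B_nonneg.
  assert (0 <= S m) by (apply rsum_nonneg; intros; apply L1; auto).
  assert (0 <= a m) by apply (ip_pos ip Hip).
  set (t := B + S m) in *.
  assert (S m * t <= t * t) by (apply Rmult_le_compat_r; unfold t; lra).
  assert (INR m * a m <= t * t) by lra.
  assert (0 <= a m * t) by (apply Rmult_le_pos; unfold t; lra).
  assert ((a m * t)^2 <= (a 0%nat * B)^2) by (apply pow_incr; lra).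
  assert (a m ^ 2 * (INR m * a m) <= a m ^ 2 * (t * t)).
  { apply Rmult_le_compat_l; [nra|auto]. }
  replace (INR m * a m ^ 3) with (a m ^ 2 * (INR m * a m)) by ring.
  replace ((a m * t)^2) with (a m ^ 2 * (t * t)) in H5 by ring. lra. Qed.

End PGA.

Lemma ln_sqrt' x : 0 < x -> ln (sqrt x) = / 2 * ln x.
Proof. intros hx. rewrite <- Rpower_sqrt by auto. unfold Rpower. apply ln_exp. Qed.

Lemma ratio_exp X Y Z : exp X / (exp Y * exp Z) = exp (X - Y - Z).
Proof. unfold Rminus. rewrite !exp_plus, !exp_Ropp. field.
  split; apply Rgt_not_eq, exp_pos. Qed.

Lemma final_upper am a0 B mR al : 0 <= am -> am <= a0 -> 0 < a0 -> 0 <= B -> 1 <= mR ->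
  mR * am ^ 3 <= (a0 * B) ^ 2 -> 0 < al -> al <= 1/3 ->
  sqrt am / (Rpower (sqrt a0) (1 - al) * Rpower B al) <= Rpower mR (- al / 2).
Proof. intros h0 h1 h2 h3 h4 h5 h6 h7.
  destruct h0 as [hpos|hz].
  2:{ subst. rewrite sqrt_0. unfold Rdiv. rewrite Rmult_0_l. left. apply exp_pos. }
  assert (hB : 0 < B).
  { destruct h3 as [|hb]; auto. subst. assert (0 < mR * am^3) by (apply Rmult_lt_0_compat; [lra| apply pow_lt; auto]). nra. }
  rewrite <- (Rpower_sqrt am) by auto. unfold Rpower. rewrite ln_sqrt' by auto.
  rewrite ratio_exp. apply exp_le_mono.
  assert (la : ln am <= ln a0) by (apply ln_le; auto).
  assert (lb : ln (mR * am^3) <= ln ((a0*B)^2)).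
  { apply ln_le; auto. apply Rmult_lt_0_compat; [lra| apply pow_lt; auto]. }
  rewrite ln_mult, !ln_pow, ln_mult in lb by (try apply pow_lt; try apply Rmult_lt_0_compat; lra).
  assert (lm : 0 <= ln mR) by (rewrite <- ln_1; apply ln_le; lra).
  simpl INR in lb.
  assert (0 <= (1 - 3*al) * (ln a0 - ln am)) by (apply Rmult_le_pos; lra).
  assert (0 <= al * (2 * ln a0 + 2 * ln B - ln mR - 3 * ln am)) by (apply Rmult_le_pos; lra).
  nra. Qed.

Lemma final_lower mR al : 1 <= mR -> 0 < al -> al <= 1/3 ->
  1/2 * Rpower mR (- al / 2) <= sqrt mR / (Rpower (sqrt (mR + mR)) (1 - al) * Rpower (mR + mR) al).
Proof. intros h1 h2 h3.
  rewrite <- (Rpower_sqrt mR) by lra. unfold Rpower. rewrite ln_sqrt' by lra.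
  rewrite ratio_exp.
  replace (mR + mR) with (2 * mR) by ring. rewrite ln_mult by lra.
  assert (l2 : 0 < ln 2) by (rewrite <- ln_1; apply ln_increasing; lra).
  replace (1/2) with (exp (- ln 2)) by (rewrite exp_Ropp, exp_ln; lra).
  rewrite <- exp_plus. apply exp_le_mono.
  assert (0 <= (1 - al) * ln 2) by (apply Rmult_le_pos; lra).
  nra. Qed.

Section Cex.
Context {H : ModuleSpace R_Ring} (ip : H -> H -> R) (Hip : is_inner_product ip).

Fixpoint Lc (c : nat -> R) (e : nat -> H) n : list (R * H) :=
  match n with O => nil | S n => (c n, e n) :: Lc c e n end.
Fixpoint Le (e : nat -> H) n : list H :=
  match n with O => nil | S n => e n :: Le e n end.

Lemma ip_lin_Lc c e n y : ip (lin (Lc c e n)) y = rsum (fun i => c i * ip (e i) y) n.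
Proof. induction n; simpl. apply (ip_zerol ip Hip).
  rewrite (ip_plusl ip Hip), (ip_scall ip Hip). fold (lin (Lc c e n)). rewrite IHn. ring. Qed.

Definition ortho (e : nat -> H) N := forall i j, (i < N)%nat -> (j < N)%nat ->
  ip (e i) (e j) = if Nat.eqb i j then 1 else 0.

Lemma rsum_delta e N c j : ortho e N -> (j < N)%nat -> forall n, (n <= N)%nat ->
  rsum (fun i => c i * ip (e i) (e j)) n = if Nat.ltb j n then c j else 0.
Proof. intros ho hj. induction n; intros hn. simpl. auto.
  simpl rsum. rewrite IHn by lia. rewrite (ho n j) by lia.
  destruct (Nat.eqb_spec n j), (Nat.ltb_spec j n), (Nat.ltb_spec j (S n)); subst; try lia; ring. Qed.

Lemma span_Lc (P : H -> Prop) c e n : (forall i, (i < n)%nat -> P (e i)) -> in_span P (lin (Lc c e n)).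
Proof. induction n; intros h. apply span_zero. simpl. apply (span_step P (c n) (e n)).
  apply h; lia. apply IHn. intros; apply h; lia. Qed.

Lemma In_Le e n i : (i < n)%nat -> List.In (e i) (Le e n).
Proof. induction n; intros h. lia. simpl. destruct (Nat.eq_dec i n). subst; auto. right; apply IHn; lia. Qed.

Lemma proj_perp e N x j : ortho e N -> (j < N)%nat ->
  ip (minus x (lin (Lc (fun i => ip x (e i)) e N))) (e j) = 0.
Proof. intros ho hj. rewrite (ip_minusl ip Hip), ip_lin_Lc, (rsum_delta e N) by auto.
  destruct (Nat.ltb_spec j N); [ring|lia]. Qed.

Lemma unit_of (w : H) : w <> zero -> ip (scal (/ sqrt (ip w w)) w) (scal (/ sqrt (ip w w)) w) = 1.
Proof. intros hw. assert (hq : 0 < ip w w).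
  { destruct (ip_pos ip Hip w) as [h|h]; auto. exfalso; apply hw, (ip_def ip Hip); auto. }
  rewrite (ip_scall ip Hip), (ip_scalr ip Hip).
  pose proof (sqrt_sqrt _ (Rlt_le _ _ hq)). pose proof (sqrt_lt_R0 _ hq).
  set (s := sqrt (ip w w)) in *. rewrite <- H0. field. lra. Qed.

Lemma ortho_exists : @infinite_dim H -> forall N, exists e, ortho e N.
Proof. intros hinf. induction N.
  - exists (fun _ => zero). intros i j hi. lia.
  - destruct IHN as [e ho].
    assert (hx : exists x, ~ in_span (fun g => List.In g (Le e N)) x).
    { apply not_all_ex_not. intros hall. apply hinf. exists (Le e N). auto. }
    destruct hx as [x hx].
    set (w := minus x (lin (Lc (fun i => ip x (e i)) e N))).
    assert (hw : w <> zero).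
    { intros hz. apply hx. rewrite (minus_zero_eq x _ hz). apply span_Lc. intros; apply In_Le; auto. }
    exists (fun i => if Nat.eqb i N then scal (/ sqrt (ip w w)) w else e i).
    intros i j hi hj. cbv beta.
    destruct (Nat.eqb_spec i N), (Nat.eqb_spec j N), (Nat.eqb_spec i j); subst; try lia.
    + apply unit_of; auto.
    + rewrite (ip_scall ip Hip). unfold w. rewrite proj_perp by (auto; lia). ring.
    + rewrite (ip_scalr ip Hip), (ip_sym ip Hip (e i) w). unfold w. rewrite proj_perp by (auto; lia). ring.
    + rewrite (ho j j) by lia. rewrite Nat.eqb_refl. auto.
    + rewrite (ho i j) by lia. destruct (Nat.eqb_spec i j); [lia|auto].
Qed.

Fixpoint pseq (f : H) (e : nat -> H) k : H :=
  match k with O => f | S k => minus (pseq f e k) (scal (ip (pseq f e k) (e k)) (e k)) end.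

Section WithE.
Variable (e : nat -> H) (N : nat).
Hypothesis ho : ortho e N.

Definition Dc (g : H) : Prop :=
  (exists i, (i < N)%nat /\ (g = e i \/ g = opp (e i))) \/
  (hnorm ip g = 1 /\ forall i, (i < N)%nat -> ip g (e i) = 0).
Definition fc : H := lin (Lc (fun _ => 1) e N).
Definition fsc k := pseq fc e k.

Lemma F1 k : (k <= N)%nat -> forall i, (i < N)%nat -> ip (fsc k) (e i) = if Nat.ltb i k then 0 else 1.
Proof. induction k; intros hk i hi.
  - unfold fsc; simpl. unfold fc. rewrite ip_lin_Lc, (rsum_delta e N) by auto.
    destruct (Nat.ltb_spec i N); [auto|lia].
  - unfold fsc; simpl pseq. fold (fsc k).
    rewrite (ip_minusl ip Hip), (ip_scall ip Hip), !IHk by lia. rewrite (ho k i) by lia.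
    destruct (Nat.ltb_spec k k); try lia.
    destruct (Nat.ltb_spec i k), (Nat.ltb_spec i (S k)), (Nat.eqb_spec k i); subst; try lia; ring. Qed.

Lemma F2 k : (k <= N)%nat -> forall h, (forall i, (i < N)%nat -> ip h (e i) = 0) -> ip (fsc k) h = 0.
Proof. induction k; intros hk h hh.
  - unfold fsc; simpl. unfold fc. rewrite ip_lin_Lc.
    rewrite (rsum_ext _ (fun _ => 0)). rewrite rsum_const; ring.
    intros j hj. rewrite (ip_sym ip Hip), hh by auto. ring.
  - unfold fsc; simpl pseq. fold (fsc k).
    rewrite (ip_minusl ip Hip), (ip_scall ip Hip), IHk by (auto; lia).
    rewrite (ip_sym ip Hip (e k)), hh by lia. ring. Qed.

Lemma F3 k : (k <= N)%nat -> ip (fsc k) (fsc k) = INR N - INR k.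
Proof. induction k; intros hk.
  - unfold fsc; simpl pseq. unfold fc at 1. rewrite ip_lin_Lc.
    rewrite (rsum_ext _ (fun _ => 1)). rewrite rsum_const; simpl; ring.
    intros j hj. rewrite (ip_sym ip Hip). fold fc. change fc with (fsc 0). rewrite F1 by lia. simpl. ring.
  - unfold fsc; simpl pseq. fold (fsc k).
    rewrite (ip_step ip Hip), IHk by lia. rewrite F1 by lia. rewrite (ho k k) by lia.
    rewrite Nat.eqb_refl. destruct (Nat.ltb_spec k k); try lia. rewrite S_INR. ring. Qed.

Lemma Fmax k : (k < N)%nat -> forall h, Dc h -> ip (fsc k) h <= 1.
Proof. intros hk h [[i [hi [->| ->]]] | [_ hp]].
  - rewrite F1 by lia. destruct (Nat.ltb i k); lra.
  - rewrite (ip_oppr ip Hip), F1 by lia. destruct (Nat.ltb i k); lra.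
  - rewrite F2 by (auto; lia). lra. Qed.

Lemma Dc_dict : dictionary ip Dc.
Proof. split; [|split].
  - intros g [[i [hi [->| ->]]] | [hu _]]; auto.
    + unfold hnorm. rewrite (ho i i), Nat.eqb_refl by lia. apply sqrt_1.
    + unfold hnorm. rewrite (ip_oppl ip Hip), (ip_oppr ip Hip), (ho i i), Nat.eqb_refl by lia.
      rewrite Ropp_involutive. apply sqrt_1.
  - intros g [[i [hi [->| ->]]] | [hu hp]].
    + left. exists i. auto.
    + left. exists i. rewrite opp_opp. auto.
    + right. split. unfold hnorm in *. rewrite (ip_oppl ip Hip), (ip_oppr ip Hip).
      replace (- - ip g g) with (ip g g) by ring. auto.
      intros i hi. rewrite (ip_oppl ip Hip), hp by auto. ring.
  - intros f0 eps he. exists f0. split.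
    2:{ rewrite (minus_eq_zero (G:=H)). unfold hnorm; rewrite (ip_zerol ip Hip), sqrt_0. auto. }
    set (y := lin (Lc (fun i => ip f0 (e i)) e N)).
    set (w := minus f0 y).
    assert (hy : in_span Dc y).
    { apply span_Lc. intros i hi. left. exists i. auto. }
    destruct (classic (w = zero)) as [hz|hnz].
    + rewrite (minus_zero_eq f0 y hz). auto.
    + assert (hq : 0 < ip w w).
      { destruct (ip_pos ip Hip w) as [h|h]; auto. exfalso; apply hnz, (ip_def ip Hip); auto. }
      pose proof (sqrt_lt_R0 _ hq).
      assert (hs : scal (sqrt (ip w w)) (scal (/ sqrt (ip w w)) w) = w).
      { rewrite scal_assoc. change (mult (sqrt (ip w w)) (/ sqrt (ip w w))) with (sqrt (ip w w) * / sqrt (ip w w)).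
        rewrite Rinv_r by lra. apply (scal_one (K:=R_Ring)). }
      assert (hf : f0 = plus (scal (sqrt (ip w w)) (scal (/ sqrt (ip w w)) w)) y).
      { rewrite hs. unfold w. symmetry. apply (plus_minus_K (G:=H)). }
      rewrite hf. apply span_step; auto. right. split.
      * unfold hnorm. rewrite unit_of by auto. apply sqrt_1.
      * intros i hi. rewrite (ip_scall ip Hip). unfold w, y. rewrite proj_perp by auto. ring.
Qed.

Lemma fold_w a n : fold_right (fun p s => fst p + s) 0 (Lc (fun _ => a) e n) = INR n * a.
Proof. induction n; simpl fold_right. simpl; ring. rewrite IHn, S_INR. simpl. ring. Qed.

Lemma scal_lin_const a n : scal a (lin (Lc (fun _ => 1) e n)) = lin (Lc (fun _ => a) e n).
Proof. induction n; simpl. apply scal_zero_r.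
  rewrite scal_distr_l, scal_assoc. fold (lin (Lc (fun _ => 1) e n)). rewrite IHn. change (mult a 1) with (a * 1). rewrite Rmult_1_r. auto. Qed.

Lemma Forall_Lc a n : 0 <= a -> (n <= N)%nat -> List.Forall (fun p => 0 <= fst p /\ Dc (snd p)) (Lc (fun _ => a) e n).
Proof. intros ha. induction n; intros hn; simpl; constructor; auto.
  simpl. split; auto. left. exists n. split; auto; lia. apply IHn; lia. Qed.

Lemma fc_scales : (0 < N)%nat -> A1_scales ip Dc fc (INR N).
Proof. intros hN. assert (0 < INR N) by (apply lt_0_INR; auto). split; auto.
  intros eps he. exists (scal (/ INR N) fc). split.
  - exists (Lc (fun _ => / INR N) e N). split; [|split].
    + apply Forall_Lc. left; apply Rinv_0_lt_compat; auto. lia.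
    + rewrite fold_w. field. lra.
    + unfold fc. rewrite scal_lin_const. auto.
  - rewrite (minus_eq_zero (G:=H)); unfold hnorm; rewrite (ip_zerol ip Hip), sqrt_0. auto. Qed.

End WithE.
End Cex.

Theorem mainTheorem3 (H : ModuleSpace R_Ring) (ip : H -> H -> R) :
  inf_dim_hilbert ip ->
  forall (m : nat) (alpha : R),
    (1 <= m)%nat -> 0 < alpha -> alpha <= 1 / 3 ->
    Rbar_le (Finite (1 / 2 * Rpower (INR m) (- alpha / 2))) (gamma ip m alpha) /\
    Rbar_le (gamma ip m alpha) (Finite (Rpower (INR m) (- alpha / 2))).
Proof.
  intros [Hip [_ Hinf]] m al hm ha1 ha2.
  assert (hmR : 1 <= INR m) by (replace 1 with (INR 1) by reflexivity; apply le_INR; auto).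
  split.
  - destruct (ortho_exists ip Hip Hinf (m + m)) as [e ho].
    set (N := (m + m)%nat) in *.
    set (D := Dc ip e N). set (f := fc e N). set (fs := fsc ip e N).
    assert (hd : dictionary ip D) by (apply Dc_dict; auto).
    assert (hsc : A1_scales ip D f (INR N)) by (apply fc_scales; auto; unfold N; lia).
    assert (hfin : A1_finite ip D f) by (exists (INR N); auto).
    assert (hmax0 : forall h, D h -> ip f h <= 1).
    { intros h hh. change f with (fs 0%nat). apply (Fmax ip Hip e N ho); auto. unfold N; lia. }
    assert (hB : A1_norm ip D f = INR N).
    { destruct (A1_norm_spec ip D f hfin) as [_ [h1 _]]. specialize (h1 _ hsc).
      pose proof (glb_le ip Hip D f f 1 hfin ltac:(lra) hmax0).
      change f with (fs 0%nat) in H0 at 1 2. rewrite (F3 ip Hip e N ho) in H0 by lia.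
      simpl in H0. lra. }
    assert (hpga : pga_realization ip m D f e fs).
    { split. reflexivity. intros k hk. split; [|split].
      - left. exists k. split; auto. unfold N; lia.
      - intros h hh. rewrite (F1 ip Hip e N ho k) by (unfold N; lia).
        destruct (Nat.ltb_spec k k); try lia. apply (Fmax ip Hip e N ho); auto. unfold N; lia.
      - reflexivity. }
    assert (hff : ip f f = INR N).
    { change f with (fs 0%nat) at 1 2. rewrite (F3 ip Hip e N ho) by lia. simpl. ring. }
    assert (hf0 : f <> zero).
    { intros hz. rewrite hz, (ip_zerol ip Hip) in hff. unfold N in hff. rewrite plus_INR in hff. lra. }
    unfold gamma. destruct (Lub_Rbar_correct (fun r => exists (D : H -> Prop) (f : H) (g fs : nat -> H),
      dictionary ip D /\ f <> zero /\ A1_finite ip D f /\ pga_realization ip m D f g fs /\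
      r = hnorm ip (fs m) / (Rpower (hnorm ip f) (1 - al) * Rpower (A1_norm ip D f) al))) as [hub _].
    eapply Rbar_le_trans; [| apply hub; exists D, f, e, fs; split; [exact hd| split; [exact hf0| split; [exact hfin | split; [exact hpga | reflexivity]]]]].
    simpl. rewrite hB. unfold hnorm. rewrite hff, (F3 ip Hip e N ho) by lia.
    unfold N. rewrite plus_INR. replace (INR m + INR m - INR m) with (INR m) by ring.
    apply final_lower; auto.
  - unfold gamma. destruct (Lub_Rbar_correct (fun r => exists (D : H -> Prop) (f : H) (g fs : nat -> H),
      dictionary ip D /\ f <> zero /\ A1_finite ip D f /\ pga_realization ip m D f g fs /\
      r = hnorm ip (fs m) / (Rpower (hnorm ip f) (1 - al) * Rpower (A1_norm ip D f) al))) as [_ hl].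
    apply hl. intros x [D [f [g [fs [hd [hf0 [hfin [hp ->]]]]]]]].
    simpl. destruct (pga_bound ip Hip D f g fs m hd hfin hp) as [h1 h2].
    destruct hp as [h0 _]. rewrite h0 in h1, h2.
    assert (hq : 0 < ip f f).
    { destruct (ip_pos ip Hip f) as [h|h]; auto. exfalso; apply hf0, (ip_def ip Hip); auto. }
    destruct (A1_norm_spec ip D f hfin) as [hB _].
    unfold hnorm. apply final_upper; auto. apply ip_pos; auto.
Qed.
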